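(* Let $\Sigma$ be an alphabet, $\triangleleft\notin\Sigma$, and let $L\subseteq\Sigma^*$ be a context-free language all of whose strings have length at least $2$. Then there exists a pop-normalized MPDA $\mathcal A$ with $L(\mathcal A)=\mathrm{Next}(L)$.
   Context: $\mathrm{Next}(L)=\bigcup_{n\in\mathbb N}\{\langle\sigma_2,\sigma_1\rangle\cdots\langle\sigma_n,\sigma_{n-1}\rangle\langle\triangleleft,\sigma_n\rangle\mid\sigma_1,\dots,\sigma_n\in\Sigma,\ \sigma_1\cdots\sigma_n\in L\}$, a language over $(\Sigma\cup\{\triangleleft\})\times\Sigma$. A Moore push-down automaton (MPDA) is $\mathcal A=(Q,\Delta,\Gamma,\delta,\tau,I,F)$ with finite sets $Q$ (states), $\Delta$ (input symbols), $\Gamma$ (stack symbols), transitions $\delta\subseteq(Q\times\Gamma^{\le1}\times\Gamma^{\le1}\times Q)\setminus(Q\times\Gamma\times\Gamma\times Q)$ with $\Gamma^{\le1}=\{\varepsilon\}\cup\Gamma$, output function $\tau:Q\to\Delta$, and $I,F\subseteq Q$. Configurations $\langle q,\alpha\rangle\in Q\times\Gamma^*$; moves $\langle q,\gamma\alpha\rangle\vdash\langle q',\gamma'\alpha\rangle$ for $(q,\gamma,\gamma',q')\in\delta$ whenever $\gamma\alpha\ne\varepsilon$. Initial configurations: $q\in I$, $\alpha\in\Gamma$; final: $q\in F$, $\alpha=\varepsilon$. $L(\mathcal A)$ is the set of $\tau(q_0)\cdots\tau(q_n)$ for runs $\langle q_0,\alpha_0\rangle\vdash\cdots\vdash\langle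 q_n,\alpha_n\rangle$ from an initial to a final configuration. Pop-normalized: there is $\mathrm{return}:\Gamma\to Q$ with $q'=\mathrm{return}(\gamma)$ for every $(q,\gamma,\varepsilon,q')\in\delta$, $\gamma\in\Gamma$. *)

(* Defs.v *)
From mathcomp Require Import all_boot.
Set Implicit Arguments. Unset Strict Implicit. Unset Printing Implicit Defensive.

Record CFG (Sigma : finType) := {
  cfg_N : finType;
  cfg_start : cfg_N;
  cfg_prods : seq (cfg_N * seq (cfg_N + Sigma))%type
}.

Section Gen.
Variables (Sigma : finType) (G : CFG Sigma).

Inductive gen_sym : (cfg_N G + Sigma)%type -> seq Sigma -> Prop :=
| gen_term (a : Sigma) : gen_sym (inr a) [:: a]
| gen_nonterm (A : cfg_N G) (rhs : seq (cfg_N G + Sigma)) (w : seq Sigma) :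
    (A, rhs) \in cfg_prods G -> gen_seq rhs w -> gen_sym (inl A) w
with gen_seq : seq (cfg_N G + Sigma) -> seq Sigma -> Prop :=
| gen_nil : gen_seq [::] [::]
| gen_cons X s u v : gen_sym X u -> gen_seq s v -> gen_seq (X :: s) (u ++ v).

Definition cfg_lang (w : seq Sigma) : Prop := gen_sym (inl (cfg_start G)) w.
End Gen.

Definition is_context_free (Sigma : finType) (L : seq Sigma -> Prop) : Prop :=
  exists G : CFG Sigma, forall w, L w <-> cfg_lang G w.

(* ---------- Next(L) ----------
   The fresh symbol "triangleleft" is represented by [None] in [option Sigma].
   For w = s1 ... sn, next_word w = <s2,s1> ... <sn,s_{n-1}> <None,sn>. *)
Definition next_word (Sigma : Type) (w : seq Sigma) : seq (option Sigma * Sigma) :=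
  zip (rcons (map Some (behead w)) None) w.

Definition Next (Sigma : Type) (L : seq Sigma -> Prop)
  (u : seq (option Sigma * Sigma)) : Prop :=
  exists w, L w /\ u = next_word w.

Definition oseq (T : Type) (g : option T) : seq T :=
  if g is Some x then [:: x] else [::].

Record MPDA (Delta : Type) := {
  mp_Q : finType;
  mp_Gamma : finType;
  mp_delta : {set mp_Q * option mp_Gamma * option mp_Gamma * mp_Q};
  mp_delta_wf : forall q g g' q', (q, Some g, Some g', q') \notin mp_delta;
  mp_tau : mp_Q -> Delta;
  mp_I : {set mp_Q};
  mp_F : {set mp_Q}
}.

Section MPDASem.
Variables (Delta : Type) (A : MPDA Delta).

Definition config := (mp_Q A * seq (mp_Gamma A))%type.

Definition mp_step (c c' : config) : Prop :=
  exists q g g' q' (al : seq (mp_Gamma A)),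
    (q, g, g', q') \in mp_delta A /\ oseq g ++ al <> [::] /\
    c = (q, oseq g ++ al) /\ c' = (q', oseq g' ++ al).

Fixpoint is_run (c : config) (cs : seq config) : Prop :=
  if cs is c' :: cs' then mp_step c c' /\ is_run c' cs' else True.

Definition initial_config (c : config) : Prop :=
  c.1 \in mp_I A /\ size c.2 = 1.

Definition final_config (c : config) : Prop :=
  c.1 \in mp_F A /\ c.2 = [::].

Definition mp_lang (u : seq Delta) : Prop :=
  exists (c0 : config) (cs : seq config),
    initial_config c0 /\ is_run c0 cs /\ final_config (last c0 cs) /\
    u = map (fun c : config => @mp_tau _ A c.1) (c0 :: cs).

Definition pop_normalized : Prop :=
  exists ret : mp_Gamma A -> mp_Q A,
    forall q g q', (q, Some g, None, q') \in mp_delta A -> q' = ret g.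
End MPDASem.

(* Main.v *)
From Stdlib Require Import ClassicalEpsilon.
Require Import Defs.
From mathcomp Require Import all_boot.
Set Implicit Arguments. Unset Strict Implicit. Unset Printing Implicit Defensive.

Section Gram.
Variables (Sigma : finType) (G : CFG Sigma).
Local Notation N := (cfg_N G).
Local Notation sym := (N + Sigma)%type.
Local Notation prods := (cfg_prods G).
Local Notation gsym := (@gen_sym _ G).
Local Notation gseq := (@gen_seq _ G).

Scheme gsym_mind := Induction for gen_sym Sort Prop
with gseq_mind := Induction for gen_seq Sort Prop.

Lemma gseq_cons_inv X s w : gseq (X :: s) w ->
  exists u v, w = u ++ v /\ gsym X u /\ gseq s v.
Proof. by move=> H; inversion H; subst; exists u, v. Qed.

Lemma gseq_nil_inv w : gseq [::] w -> w = [::].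
Proof. by move=> H; inversion H. Qed.

Lemma gsym_term_inv a w : gsym (inr a) w -> w = [:: a].
Proof. by move=> H; inversion H. Qed.

Lemma gseq_cat s1 s2 w1 w2 : gseq s1 w1 -> gseq s2 w2 -> gseq (s1 ++ s2) (w1 ++ w2).
Proof.
elim: s1 w1 => [|X s1 IH] w1 H1 H2.
  by rewrite (gseq_nil_inv H1).
have [u [v [-> [Hu Hv]]]] := gseq_cons_inv H1.
rewrite -catA /=; apply: gen_cons => //; exact: IH.
Qed.

Lemma gseq_split s1 s2 w : gseq (s1 ++ s2) w ->
  exists w1 w2, w = w1 ++ w2 /\ gseq s1 w1 /\ gseq s2 w2.
Proof.
elim: s1 w => [|X s1 IH] w /= H.
  by exists [::], w; split=> //; split=> //; constructor.
have [u [v [-> [Hu Hv]]]] := gseq_cons_inv H.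
have [w1 [w2 [-> [H1 H2]]]] := IH _ Hv.
by exists (u ++ w1), w2; rewrite catA; split=> //; split=> //; constructor.
Qed.

Definition d0 : (N * seq sym)%type := (cfg_start G, [::]).
Definition np := size prods.
Definition M := (\max_(p <- prods) size p.2).+1.
Definition item := ('I_np * 'I_M)%type.
Definition lhs (i : item) : N := (nth d0 prods i.1).1.
Definition rhs (i : item) : seq sym := (nth d0 prods i.1).2.
Definition dot (i : item) : nat := i.2.

Lemma rhs_lt i : size (rhs i) < M.
Proof.
rewrite ltnS /rhs.
apply: (@leq_bigmax_seq _ _ xpredT (fun p : N * seq sym => size p.2)) => //.
by apply: mem_nth; case: i => [[k hk] d].
Qed.

Lemma prod_mem i : (lhs i, rhs i) \in prods.
Proof. by rewrite /lhs /rhs -surjective_pairing; apply: mem_nth; case: i => [[k hk] d]. Qed.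

Definition after (Y : sym) (i : item) : Prop :=
  exists g b, rhs i = g ++ Y :: b /\ dot i = (size g).+1 /\ gseq g [::].

Lemma after_drop Y i : after Y i -> exists g, rhs i = g ++ Y :: drop (dot i) (rhs i) /\ gseq g [::].
Proof.
case=> g [b [-> [-> Hg]]]; exists g; split=> //.
have -> : (size g).+1 = size (g ++ [:: Y]) by rewrite size_cat addn1.
by rewrite -[Y :: b]cat1s catA drop_size_cat // -catA.
Qed.

Inductive up (X : N) : item -> seq Sigma -> Prop :=
| up_stop i v : lhs i = X -> gseq (drop (dot i) (rhs i)) v -> up X i v
| up_climb i i' v1 v2 : gseq (drop (dot i) (rhs i)) v1 -> after (inl (lhs i)) i' ->
    up X i' v2 -> up X i (v1 ++ v2).

Lemma prod_item A r : (A, r) \in prods -> forall d, d <= size r ->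
  exists i : item, lhs i = A /\ rhs i = r /\ dot i = d.
Proof.
move=> Hm d hd.
have hk : index (A, r) prods < np by rewrite index_mem.
have hr : nth d0 prods (index (A, r) prods) = (A, r) by rewrite nth_index.
have hdM : d < M.
  apply: leq_ltn_trans hd _; rewrite ltnS.
  exact: (@leq_bigmax_seq _ _ xpredT (fun p : N * seq sym => size p.2) (A, r)).
exists (Ordinal hk, Ordinal hdM).
by rewrite /lhs /rhs /dot /= hr.
Qed.

Lemma drop_after (g b : seq sym) Y : drop (size g).+1 (g ++ Y :: b) = b.
Proof.
have -> : (size g).+1 = size (g ++ [:: Y]) by rewrite size_cat addn1.
by rewrite -[Y :: b]cat1s catA drop_size_cat.
Qed.

Lemma split_first s c w : gseq s (c :: w) ->
  exists g Y b u1 u2, s = g ++ Y :: b /\ gseq g [::] /\ gsym Y (c :: u1) /\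
    gseq b u2 /\ w = u1 ++ u2.
Proof.
elim: s w => [|X s IH] w H.
  by have := gseq_nil_inv H.
have [u [v [Huv [Hu Hv]]]] := gseq_cons_inv H.
case: u Huv Hu => [|c' u] /= Huv Hu.
  subst v; have [g [Y [b [u1 [u2 [-> [Hg [HY [Hb ->]]]]]]]]] := IH _ Hv.
  exists (X :: g), Y, b, u1, u2; split=> //; split=> //.
  by have -> : ([::] : seq Sigma) = [::] ++ [::] by []; constructor.
case: Huv => Hc Hw; subst.
by exists [::], X, s, u, v; do !split=> //; constructor.
Qed.

Definition spineP (Y : sym) (c : Sigma) (u : seq Sigma) : Prop :=
  (Y = inr c /\ u = [::]) \/ exists B i, Y = inl B /\ after (inr c) i /\ up B i u.

Lemma up_ext B i u1 : up B i u1 -> forall j u2, after (inl B) j ->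
  gseq (drop (dot j) (rhs j)) u2 -> up (lhs j) i (u1 ++ u2).
Proof.
elim=> [i0 v Hl Hg | i0 i' v1 v2 H1 Ha Hup IH] j u2 Hj Hd.
  apply: up_climb; first exact: Hg.
    by rewrite Hl; exact: Hj.
  exact: up_stop.
rewrite -catA; apply: up_climb; [exact: H1 | exact: Ha | exact: IH].
Qed.

Lemma spine_fwd Y w : gsym Y w -> forall c u, w = c :: u -> spineP Y c u.
Proof.
move: Y w.
refine (gsym_mind
  (P := fun Y w (_ : gsym Y w) => forall c u, w = c :: u -> spineP Y c u)
  (P0 := fun s w (_ : gseq s w) => forall c u, w = c :: u ->
     exists g Y b u1 u2, s = g ++ Y :: b /\ gseq g [::] /\ spineP Y c u1 /\
       gseq b u2 /\ u = u1 ++ u2) _ _ _ _).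
- by move=> a c u [Hc Hu]; subst; left.
- move=> A r w0 Hm Hs IHs c u Hw.
  have [g [Y0 [b [u1 [u2 [Hr [Hg [HY [Hb Hu]]]]]]]]] := IHs c u Hw.
  have hd : (size g).+1 <= size r by rewrite Hr size_cat /= addnS ltnS leq_addr.
  have [i0 [Hl [Hr0 Hd]]] := prod_item Hm hd.
  have Ha : forall Z, Z = Y0 -> after Z i0.
    by move=> Z ->; exists g, b; rewrite Hr0 Hd Hr.
  have Hdrop : drop (dot i0) (rhs i0) = b by rewrite Hr0 Hd Hr drop_after.
  case: HY => [[HY0 Hu1] | [B [i [HY0 [Hai Hup]]]]]; subst Y0.
    subst u1.
    right; exists A, i0; split=> //; split; first exact: Ha.
    by apply: up_stop => //; rewrite Hdrop Hu.
  right; exists A, i; split=> //; split=> //.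
  rewrite Hu -Hl; apply: (up_ext Hup); first exact: Ha.
  by rewrite Hdrop.
- by [].
- move=> X s u v HX IHX Hs IHs c u' Huv.
  case: u Huv HX IHX => [|c' u0] /= Huv HX IHX.
    subst v; have [g [Y0 [b [u1 [u2 [-> [Hg [HY [Hb ->]]]]]]]]] := IHs c u' erefl.
    exists (X :: g), Y0, b, u1, u2; split=> //; split=> //.
    by have -> : ([::] : seq Sigma) = [::] ++ [::] by []; constructor.
  case: Huv => Hc Hu'; subst c' u'.
  by exists [::], X, s, u0, v; split=> //; split=> //; [constructor | split=> //; exact: IHX].
Qed.

Lemma lift_prod Y i u v : after Y i -> gsym Y u ->
  gseq (drop (dot i) (rhs i)) v -> gsym (inl (lhs i)) (u ++ v).
Proof.
move=> /after_drop [g [Hr Hg]] HY Hd.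
apply: gen_nonterm; first exact: prod_mem.
rewrite Hr -[u ++ v]cat0s; apply: gseq_cat => //.
exact: gen_cons.
Qed.

Lemma spine_bwd A i w : up A i w -> forall Y u, after Y i -> gsym Y u ->
  gsym (inl A) (u ++ w).
Proof.
elim=> [i0 v Hl Hg | i0 i' v1 v2 H1 Ha Hup IH] Y u HY Hu.
  by rewrite -Hl; exact: lift_prod HY Hu Hg.
rewrite catA; apply: IH Ha _.
exact: lift_prod HY Hu H1.
Qed.


Inductive next : item -> sym -> item -> Prop :=
| nx_here i Y j g b : drop (dot i) (rhs i) = g ++ Y :: b -> gseq g [::] ->
    lhs j = lhs i -> rhs j = rhs i -> dot j = dot i + (size g).+1 -> next i Y j
| nx_up i Y j i' : gseq (drop (dot i) (rhs i)) [::] -> after (inl (lhs i)) i' ->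
    next i' Y j -> next i Y j.

Lemma drop_adv i j g Y b : drop (dot i) (rhs i) = g ++ Y :: b ->
  rhs j = rhs i -> dot j = dot i + (size g).+1 -> drop (dot j) (rhs j) = b.
Proof.
by move=> Hd -> ->; rewrite addnC -drop_drop Hd drop_after.
Qed.

Lemma item_adv i g Y b : drop (dot i) (rhs i) = g ++ Y :: b ->
  exists j, lhs j = lhs i /\ rhs j = rhs i /\ dot j = dot i + (size g).+1 /\
    drop (dot j) (rhs j) = b.
Proof.
move=> Hd.
have hs : size (drop (dot i) (rhs i)) = size g + (size b).+1 by rewrite Hd size_cat.
rewrite size_drop in hs.
have hle : dot i + (size g).+1 <= size (rhs i).
  move: hs; set n := size (rhs i); set d := dot i; move=> hs.
  have : 0 < n - d by rewrite hs addnS.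
  rewrite subn_gt0 => hdn.
  by rewrite -(subnKC (ltnW hdn)) hs leq_add2l addnS ltnS leq_addr.
have [j [Hl [Hr Hdj]]] := prod_item (prod_mem i) hle.
exists j; split=> //; split=> //; split=> //.
exact: drop_adv Hd Hr Hdj.
Qed.

Lemma up_inv X j v : up X j v ->
  (lhs j = X /\ gseq (drop (dot j) (rhs j)) v) \/
  exists i' v1 v2, v = v1 ++ v2 /\ gseq (drop (dot j) (rhs j)) v1 /\
    after (inl (lhs j)) i' /\ up X i' v2.
Proof.
case=> [j0 v0 Hl Hg | j0 i' v1 v2 H1 Ha Hup]; first by left.
by right; exists i', v1, v2.
Qed.

Lemma decomp X i v : up X i v -> forall c v', v = c :: v' ->
  exists Y j u1 u2, next i Y j /\ gsym Y (c :: u1) /\ up X j u2 /\ v' = u1 ++ u2.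
Proof.
elim=> [i0 v0 Hl Hg | i0 i' v1 v2 H1 Ha Hup IH] c v' Hv.
  subst v0.
  have [g [Y [b [u1 [u2 [Hd [Hge [HY [Hb ->]]]]]]]]] := split_first Hg.
  have [j [Hlj [Hrj [Hdj Hdb]]]] := item_adv Hd.
  exists Y, j, u1, u2; split; first exact: nx_here Hd Hge Hlj Hrj Hdj.
  split=> //; split=> //.
  by apply: up_stop; [rewrite Hlj | rewrite Hdb].
case: v1 Hv H1 => [|c1 v1] /= Hv H1.
  have [Y [j [u1 [u2 [Hn [HY [Hu ->]]]]]]] := IH c v' Hv.
  by exists Y, j, u1, u2; split=> //; exact: nx_up H1 Ha Hn.
case: Hv => Hc Hv; subst c1 v'.
have [g [Y [b [u1 [u2 [Hd [Hge [HY [Hb ->]]]]]]]]] := split_first H1.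
have [j [Hlj [Hrj [Hdj Hdb]]]] := item_adv Hd.
exists Y, j, u1, (u2 ++ v2); split; first exact: nx_here Hd Hge Hlj Hrj Hdj.
split=> //; split; last by rewrite catA.
apply: (up_climb (i' := i')); first by rewrite Hdb.
  by rewrite Hlj.
exact: Hup.
Qed.

Lemma compose i Y j : next i Y j -> forall X w u2, gsym Y w -> up X j u2 ->
  up X i (w ++ u2).
Proof.
elim=> {i Y j} [i Y j g b Hd Hg Hl Hr Hdj | i Y j i' H1 Ha Hn IH] X w u2 HY Hup.
  have Hdb := drop_adv Hd Hr Hdj.
  case: (up_inv Hup) => [[HlX Hb] | [i' [w1 [w2 [-> [Hb [Ha Hup']]]]]]].
    apply: up_stop; first by rewrite -Hl.
    rewrite Hdb in Hb; rewrite Hd -[w ++ u2]cat0s; apply: gseq_cat => //.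
    exact: gen_cons.
  rewrite catA; apply: up_climb; last exact: Hup'.
    rewrite Hdb in Hb; rewrite Hd -[w ++ w1]cat0s; apply: gseq_cat => //.
    exact: gen_cons.
  by rewrite -Hl.
rewrite -[w ++ u2]cat0s; apply: up_climb; [exact: H1 | exact: Ha | exact: IH].
Qed.

Definition frame := (N * item)%type.

Definition Step (f : frame) (c : Sigma) (o1 o2 : option frame) : Prop :=
  exists Y j, next f.2 Y j /\
  ((Y = inr c /\ o1 = None) \/
    exists B i1, Y = inl B /\ after (inr c) i1 /\
      (o1 = Some (B, i1) \/ (o1 = None /\ up B i1 [::]))) /\
  (o2 = Some (f.1, j) \/ (o2 = None /\ up f.1 j [::])).

Inductive Fr : option frame -> seq Sigma -> Prop :=
| Fr_none : Fr None [::]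
| Fr_some f c o1 o2 u1 u2 : Step f c o1 o2 -> Fr o1 u1 -> Fr o2 u2 ->
    Fr (Some f) (c :: u1 ++ u2).

Lemma Fr_up o v : Fr o v -> match o with None => v = [::] | Some f => up f.1 f.2 v end.
Proof.
elim=> // f c o1 o2 u1 u2 [Y [j [Hn [HO1 HO2]]]] _ IH1 _ IH2.
have HY : gsym Y (c :: u1).
  case: HO1 => [[-> HO] | [B [i1 [-> [Ha [HO | [HO Hu]]]]]]]; subst o1.
  - by rewrite IH1; constructor.
  - by apply: (spine_bwd IH1 Ha (u := [:: c])); constructor.
  - by rewrite IH1 -[[:: c]]cats0; apply: (spine_bwd Hu Ha); constructor.
have Hu2 : up f.1 j u2.
  by case: HO2 => [HO | [HO Hu]]; subst o2 => //; rewrite IH2.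
exact: (compose Hn HY Hu2).
Qed.

Lemma Fr_nonempty f v : Fr (Some f) v -> v <> [::].
Proof. by move=> H; inversion H. Qed.

Lemma up_Fr n : forall v, size v <= n -> forall X i, up X i v -> v <> [::] ->
  Fr (Some (X, i)) v.
Proof.
elim: n => [|n IHn] [|c v'] //= hs X i Hup _.
have [Y [j [u1 [u2 [Hn [HY [Hu2 Hv]]]]]]] := decomp Hup erefl.
have hs1 : size u1 <= n by move: hs; rewrite Hv size_cat ltnS; apply: leq_trans; rewrite leq_addr.
have hs2 : size u2 <= n by move: hs; rewrite Hv size_cat ltnS; apply: leq_trans; rewrite leq_addl.
have [o1 [HO1 HF1]] : exists o1, ((Y = inr c /\ o1 = None) \/
    exists B i1, Y = inl B /\ after (inr c) i1 /\
      (o1 = Some (B, i1) \/ (o1 = None /\ up B i1 [::]))) /\ Fr o1 u1.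
  case: (spine_fwd HY erefl) => [[-> ->] | [B [i1 [-> [Ha Hup1]]]]].
    by exists None; split; [left | constructor].
  case: u1 Hup1 hs1 {Hv HY} => [|c1 u1] Hup1 hs1.
    by exists None; split; [right; exists B, i1; do 2!split=> //; right | constructor].
  exists (Some (B, i1)); split; first by right; exists B, i1; do 2!split=> //; left.
  exact: IHn.
have [o2 [HO2 HF2]] : exists o2, (o2 = Some (X, j) \/ (o2 = None /\ up X j [::])) /\ Fr o2 u2.
  case: u2 Hu2 hs2 {Hv} => [|c2 u2] Hu2 hs2.
    by exists None; split; [right | constructor].
  by exists (Some (X, j)); split; [left | exact: IHn].
rewrite Hv; apply: (@Fr_some (X, i) c o1 o2) => //.
by exists Y, j; split.
Qed.

Lemma top_iff S a w : gsym (inl S) (a :: w) <-> exists i, after (inr a) i /\ up S i w.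
Proof.
split.
  move=> H; case: (spine_fwd H erefl) => [[] // | [B [i [[<-] [Ha Hu]]]]].
  by exists i.
case=> i [Ha Hu].
by apply: (spine_bwd Hu Ha (u := [:: a])); constructor.
Qed.

Lemma top_Fr S a c v : gsym (inl S) (a :: c :: v) <->
  exists i, after (inr a) i /\ Fr (Some (S, i)) (c :: v).
Proof.
rewrite top_iff; split; case=> i [Ha H]; exists i; split=> //.
  exact: (up_Fr (leqnn _) H).
exact: (Fr_up H).
Qed.


Definition pb (P : Prop) : bool := if excluded_middle_informative P then true else false.
Lemma pbP (P : Prop) : pb P <-> P.
Proof. by rewrite /pb; case: excluded_middle_informative. Qed.

Definition Q := (Sigma + (Sigma * Sigma * frame * option frame * option frame))%type.

Definition prevl (q : Q) : Sigma := match q with inl a => a | inr (p, _, _, _, _) => p end.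
Definition tau (q : Q) : option Sigma * Sigma :=
  match q with inl a => (None, a) | inr (p, c, _, _, _) => (Some c, p) end.

Definition deltaP (x : Q * option Q * option Q * Q) : Prop :=
  let: (q, g, g', q') := x in
  match q with
  | inl _ => False
  | inr (prev, c, f, o1, o2) => Step f c o1 o2 /\
    match o1, o2 with
    | Some f1, Some f2 => g = None /\ exists c1 oa ob p2 c2 oc od,
        g' = Some (inr (p2, c2, f2, oc, od)) /\ q' = inr (c, c1, f1, oa, ob)
    | Some f1, None => g = None /\ g' = None /\ exists c1 oa ob, q' = inr (c, c1, f1, oa, ob)
    | None, Some f2 => g = None /\ g' = None /\ exists c1 oa ob, q' = inr (c, c1, f2, oa, ob)
    | None, None => g' = None /\ g = Some q' /\ prevl q' = c
    end
  end.

Definition delta : {set Q * option Q * option Q * Q} := [set x | pb (deltaP x)].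

Lemma delta_wf q g g' q' : (q, Some g, Some g', q') \notin delta.
Proof.
rewrite inE; apply/negP => /pbP /=.
case: q => // [[[[[p c] f] [f1|] ] [f2|]]] [_] //.
- by case.
- by case.
- by case.
- by case.
Qed.

Definition Iset : {set Q} := [set q | pb (exists prev c i o1 o2,
  q = inr (prev, c, (cfg_start G, i), o1, o2) /\ after (inr prev) i)].
Definition Fset : {set Q} := [set q : Q | if q is inl _ then true else false].

Definition Amp : MPDA (option Sigma * Sigma) := {|
  mp_Q := Q; mp_Gamma := Q; mp_delta := delta; mp_delta_wf := delta_wf;
  mp_tau := tau; mp_I := Iset; mp_F := Fset |}.


Local Notation A := Amp.
Local Notation cfgA := (config Amp).
Definition tauc (x : cfgA) := tau x.1.

Fixpoint pw (p : Sigma) (s : seq Sigma) : seq (option Sigma * Sigma) :=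
  if s is y :: s' then (Some y, p) :: pw y s' else [::].

Lemma pw_cat p s1 s2 : pw p (s1 ++ s2) = pw p s1 ++ pw (last p s1) s2.
Proof. by elim: s1 p => //= y s1 IH p; rewrite IH. Qed.

Lemma next_word_pw p s : next_word (p :: s) = pw p s ++ [:: (None, last p s)].
Proof. by elim: s p => //= y s IH p; rewrite -IH. Qed.

Lemma is_run_cat (x : cfgA) s1 s2 : is_run x (s1 ++ s2) <-> is_run x s1 /\ is_run (last x s1) s2.
Proof.
elim: s1 x => [|y s1 IH] x /=; first by split=> // [[]].
rewrite IH; tauto.
Qed.

Lemma stepA (q q' : Q) g g' al : deltaP (q, g, g', q') -> oseq g ++ al <> [::] ->
  @mp_step _ A (q, oseq g ++ al) (q', oseq g' ++ al).
Proof.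
move=> H Hne; exists q, g, g', q', al; split; last by [].
by rewrite /= inE; apply/pbP.
Qed.

Lemma runC o w : Fr o w -> forall f, o = Some f -> forall c v, w = c :: v ->
  forall prev (gq : Q) al, prevl gq = last c v ->
  exists o1 o2 (cs : seq cfgA),
    is_run (((inr (prev, c, f, o1, o2) : Q), gq :: al) : cfgA) cs /\
    last (((inr (prev, c, f, o1, o2) : Q), gq :: al) : cfgA) cs = (gq, al) /\
    map tauc ((((inr (prev, c, f, o1, o2) : Q), gq :: al) : cfgA) :: cs) =
      pw prev (c :: v) ++ [:: tau gq].
Proof.
elim=> // f c o1 o2 u1 u2 HS HF1 IH1 HF2 IH2 f0 [<-] c0 v [Hc Hv] prev gq al Hl; subst c0 v.
exists o1, o2.
case: o1 HS HF1 IH1 => [f1|] HS HF1 IH1; case: o2 HS HF2 IH2 => [f2|] HS HF2 IH2.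
- case: u1 HF1 IH1 Hl => [|c1 v1] HF1 IH1 Hl; first by have := Fr_nonempty HF1.
  case: u2 HF2 IH2 Hl => [|c2 v2] HF2 IH2 Hl; first by have := Fr_nonempty HF2.
  have Hl2 : prevl gq = last c2 v2 by rewrite Hl /= last_cat.
  have [oc [od [cs2 [Hr2 [Hlast2 Hm2]]]]] := IH2 f2 erefl c2 v2 erefl (last c1 v1) gq al Hl2.
  set g2 : Q := inr (last c1 v1, c2, f2, oc, od).
  have [oa [ob [cs1 [Hr1 [Hlast1 Hm1]]]]] := IH1 f1 erefl c1 v1 erefl c g2 (gq :: al) erefl.
  exists (((inr (c, c1, f1, oa, ob) : Q, g2 :: gq :: al) : cfgA) :: cs1 ++ cs2).
  split.
    split.
      have -> : gq :: al = oseq None ++ gq :: al by [].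
      have -> : g2 :: gq :: al = oseq (Some g2) ++ gq :: al by [].
      apply: stepA; last by [].
      split=> //; split=> //.
      by exists c1, oa, ob, (last c1 v1), c2, oc, od.
    by apply/is_run_cat; rewrite Hlast1; split.
  split; first by rewrite /= last_cat Hlast1 -Hlast2.
  have Hm2' : map tauc cs2 = pw c2 v2 ++ [:: tau gq] by move: Hm2 => /= [].
  rewrite map_cons -cat_cons map_cat Hm1 Hm2' /= pw_cat -!catA.
  by [].
- rewrite (Fr_up HF2) cats0 in Hl *.
  case: u1 HF1 IH1 Hl => [|c1 v1] HF1 IH1 Hl; first by have := Fr_nonempty HF1.
  have [oa [ob [cs1 [Hr1 [Hlast1 Hm1]]]]] := IH1 f1 erefl c1 v1 erefl c gq al Hl.
  exists (((inr (c, c1, f1, oa, ob) : Q, gq :: al) : cfgA) :: cs1).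
  split.
    split=> //.
    have -> : gq :: al = oseq None ++ gq :: al by [].
    apply: stepA; last by [].
    split=> //; split=> //; split=> //.
    by exists c1, oa, ob.
  split; first by rewrite /= Hlast1.
  by rewrite map_cons Hm1.
- rewrite (Fr_up HF1) /= in Hl *.
  case: u2 HF2 IH2 Hl => [|c2 v2] HF2 IH2 Hl; first by have := Fr_nonempty HF2.
  have [oa [ob [cs1 [Hr1 [Hlast1 Hm1]]]]] := IH2 f2 erefl c2 v2 erefl c gq al Hl.
  exists (((inr (c, c2, f2, oa, ob) : Q, gq :: al) : cfgA) :: cs1).
  split.
    split=> //.
    have -> : gq :: al = oseq None ++ gq :: al by [].
    apply: stepA; last by [].
    split=> //; split=> //; split=> //.
    by exists c2, oa, ob.
  split; first by rewrite /= Hlast1.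
  by rewrite map_cons -Hm1.
- rewrite (Fr_up HF1) (Fr_up HF2) /= in Hl *.
  exists [:: ((gq, al) : cfgA)].
  split.
    split=> //.
    have -> : gq :: al = oseq (Some gq) ++ al by [].
    have -> : al = oseq None ++ al by [].
    by apply: stepA.
  by [].
Qed.


Fixpoint LangSF (s : seq frame) (w : seq Sigma) : Prop :=
  match s with
  | [::] => w = [::]
  | f :: s' => exists u w', w = u ++ w' /\ Fr (Some f) u /\ LangSF s' w'
  end.

Lemma LangSF_cat s1 s2 w : LangSF (s1 ++ s2) w ->
  exists w1 w2, w = w1 ++ w2 /\ LangSF s1 w1 /\ LangSF s2 w2.
Proof.
elim: s1 w => [|f s1 IH] w /=; first by move=> H; exists [::], w.
case=> u [w' [-> [Hu Hw]]].
have [w1 [w2 [-> [H1 H2]]]] := IH _ Hw.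
by exists (u ++ w1), w2; rewrite catA; split=> //; split=> //; exists u, w1.
Qed.

Lemma LangSF_oseq o w : LangSF (oseq o) w -> Fr o w.
Proof.
case: o => [f|] /=; last by move=> ->; constructor.
by case=> u [w' [-> [Hu ->]]]; rewrite cats0.
Qed.

Lemma Step_Fr f c oa ob x : Step f c oa ob -> LangSF (oseq oa ++ oseq ob) x ->
  Fr (Some f) (c :: x).
Proof.
move=> HS /LangSF_cat [x1 [x2 [-> [H1 H2]]]].
by apply: Fr_some HS (LangSF_oseq H1) (LangSF_oseq H2).
Qed.

Definition stk (al : seq Q) : seq frame :=
  flatten (map (fun g : Q => match g with inl _ => [::] | inr (_, _, f, _, _) => [:: f] end) al).

Definition bok (al : seq Q) : Prop := exists b a, al = rcons b (inl a).

Lemma runS (cs : seq cfgA) : forall prev c f o1 o2 al,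
  is_run (((inr (prev, c, f, o1, o2) : Q), al) : cfgA) cs ->
  final_config (last (((inr (prev, c, f, o1, o2) : Q), al) : cfgA) cs) ->
  exists v, Step f c o1 o2 /\
    map tauc ((((inr (prev, c, f, o1, o2) : Q), al) : cfgA) :: cs) =
      pw prev (c :: v) ++ [:: (None, last c v)] /\
    LangSF (oseq o1 ++ oseq o2 ++ stk al) v /\ bok al.
Proof.
elim: cs => [|x cs IH] prev c f o1 o2 al.
  by move=> _ [] /=; rewrite inE.
move=> [[q0 [g [g' [q' [al0 [Hd [Hne [Hc Hx]]]]]]]] Hr] Hfin.
case: Hc => Hq0 Hal; subst q0 al x.
move: Hd; rewrite /= inE => /pbP /= [HS Hd].
change (is_run ((q', oseq g' ++ al0) : cfgA) cs) in Hr.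
change (final_config (last ((q', oseq g' ++ al0) : cfgA) cs)) in Hfin.
have bok_tl : forall y al1, (exists p c f o1 o2, y = inr (p, c, f, o1, o2)) ->
    bok (y :: al1) -> bok al1.
  move=> y al1 [p' [c' [f' [o1' [o2' ->]]]]] [[|y' b] [a Hb]] //.
  by case: Hb => _ ->; exists b, a.
case: o1 HS Hd => [f1|] HS Hd; case: o2 HS Hd => [f2|] HS Hd.
- case: Hd => [Hg [c1 [oa [ob [p2 [c2 [oc [od [Hg' Hq']]]]]]]]]; subst g g' q'.
  have [v1 [HS1 [Hm [HL Hb]]]] := IH _ _ _ _ _ _ Hr Hfin.
  exists (c1 :: v1); split=> //; split; first by congr (_ :: _); exact: Hm.
  split; last by apply: bok_tl Hb; do 5!eexists.
  rewrite /= catA in HL.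
  have [x1 [x2 [-> [H1 H2]]]] := LangSF_cat HL.
  by exists (c1 :: x1), x2; split=> //; split=> //; apply: Step_Fr HS1 H1.
- case: Hd => [Hg [Hg' [c1 [oa [ob Hq']]]]]; subst g g' q'.
  have [v1 [HS1 [Hm [HL Hb]]]] := IH _ _ _ _ _ _ Hr Hfin.
  exists (c1 :: v1); split=> //; split; first by congr (_ :: _); exact: Hm.
  split=> //.
  rewrite catA in HL.
  have [x1 [x2 [-> [H1 H2]]]] := LangSF_cat HL.
  by exists (c1 :: x1), x2; split=> //; split=> //; apply: Step_Fr HS1 H1.
- case: Hd => [Hg [Hg' [c1 [oa [ob Hq']]]]]; subst g g' q'.
  have [v1 [HS1 [Hm [HL Hb]]]] := IH _ _ _ _ _ _ Hr Hfin.
  exists (c1 :: v1); split=> //; split; first by congr (_ :: _); exact: Hm.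
  split=> //.
  rewrite catA in HL.
  have [x1 [x2 [-> [H1 H2]]]] := LangSF_cat HL.
  by exists (c1 :: x1), x2; split=> //; split=> //; apply: Step_Fr HS1 H1.
- case: Hd => [Hg' [Hg Hp]]; subst g g'.
  case: q' Hp Hr Hfin Hne => [a | [[[[p' c2] f2] oc] od]] /= Hp Hr Hfin Hne.
    subst a.
    case: cs IH Hr Hfin => [|y cs'] IH Hr Hfin.
      case: Hfin => _ /= ->.
      exists [::]; split=> //; split=> //; split=> //.
      by exists [::], c.
    case: Hr => [[q0 [g0 [g0' [q0' [al1 [Hd0 [_ [Hc0 _]]]]]]]] _].
    case: Hc0 => Hq0 _; subst q0.
    by move: Hd0; rewrite /= inE => /pbP.
  subst p'.
  have [v1 [HS1 [Hm [HL Hb]]]] := IH _ _ _ _ _ _ Hr Hfin.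
  exists (c2 :: v1); split=> //; split; first by congr (_ :: _); exact: Hm.
  split; last by case: Hb => b [a ->]; exists (inr (c, c2, f2, oc, od) :: b), a.
  rewrite catA in HL.
  have [x1 [x2 [-> [H1 H2]]]] := LangSF_cat HL.
  by exists (c2 :: x1), x2; split=> //; split=> //; apply: Step_Fr HS1 H1.
Qed.


Lemma main_G (L : seq Sigma -> Prop) : (forall w, L w <-> cfg_lang G w) ->
  (forall w, L w -> 2 <= size w) ->
  pop_normalized Amp /\ (forall u, mp_lang Amp u <-> Next L u).
Proof.
move=> HL H2; split.
  exists (fun g : Q => g) => q g q'; rewrite /= inE => /pbP /=.
  case: q => // [[[[[p c] f] [f1|]] [f2|]]] [_] //.
  - by case.
  - by case.
  - by case.
  - by case=> _ [[->]].
move=> u; split.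
  case=> [[q0 st] [cs [[HI Hs] [Hr [Hfin ->]]]]].
  move: HI; rewrite /= inE => /pbP [prev [c [i [o1 [o2 [Hq0 Ha]]]]]]; subst q0.
  case: st Hs Hr Hfin => [|g0 [|g1 st]] //= _ Hr Hfin.
  have [v [HS [Hm [HLs [b [a Hb]]]]]] := runS Hr Hfin.
  case: b Hb => [|y [|y' b]] //= [Hg0]; subst g0.
  exists (prev :: c :: v); split.
    apply/HL; rewrite /cfg_lang top_Fr; exists i; split=> //.
    by apply: Step_Fr HS _; rewrite /= cats0 in HLs.
  rewrite next_word_pw /=.
  exact: Hm.
case=> w [Lw ->].
have := H2 _ Lw.
case: w Lw => [|a [|c v]] // Lw _.
move/HL: Lw; rewrite /cfg_lang top_Fr => -[i [Ha HF]].
have [o1 [o2 [cs [Hr [Hlast Hm]]]]] :=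
  @runC _ _ HF _ erefl _ _ erefl a (inl (last c v) : Q) [::] erefl.
exists ((inr (a, c, (cfg_start G, i), o1, o2) : Q, [:: (inl (last c v) : Q)]) : cfgA), cs.
split.
  split=> //; rewrite /= inE; apply/pbP.
  by exists a, c, i, o1, o2.
split=> //.
split; first by rewrite Hlast; split=> //; rewrite /= inE.
rewrite next_word_pw; symmetry; exact: Hm.
Qed.

End Gram.

Unset Implicit Arguments.

Theorem corollary3p5 (Sigma : finType) (L : seq Sigma -> Prop) :
  is_context_free L ->
  (forall w, L w -> 2 <= size w) ->
  exists A : MPDA (option Sigma * Sigma)%type,
    pop_normalized A /\ (forall u, mp_lang A u <-> Next L u).
Proof.
case=> G HG H2.
exists (Amp G).
exact: main_G.
Qed.
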